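(* Let $G=\bigl((f_j)_{j=1}^n;(R^i)_{i=1}^k;(f^i_j)_{i\in[k],\,j\in R^i}\bigr)$ be a resource selection game with I.D.-dependent weighting. If all functions $f_j$ ($j\in[n]$) and $f^i_j$ ($i\in[k]$, $j\in R^i$) are continuous, then a strong Nash equilibrium exists in $G$.
   Context: For $n,k\in\mathbb{N}$, an $n$-resource/$k$-player-type resource selection game with I.D.-dependent weighting is a triple $\bigl((f_j)_{j=1}^n;(R^i)_{i=1}^k;(f^i_j)_{i\in[k],j\in R^i}\bigr)$ where each $f_j:[0,\infty)\to\mathbb{R}$ is nondecreasing, each $R^i$ is a nonempty subset of $[n]$, and each $f^i_j:[0,1]\to[0,\infty)$ is increasing. A consumption profile is a map $s:[k]\to[0,\infty)^{[n]}$ with $s_j(i)=0$ for $j\notin R^i$ and $\sum_j s_j(i)=1$ (the fraction of type-$i$ players using resource $j$). The weighted load of resource $j$ is $\mu^s_j=\sum_{i:\,j\in R^i}f^i_j(s_j(i))$ and its cost is $h^s_j=f_j(\mu^s_j)$. $s$ is a Nash equilibrium if for every $i\in[k]$, every $\ell$ with $s_\ell(i)>0$ and every $j\in R^i$, $h^s_\ell\le h^s_j$. For a Nash equilibrium $s$ and $i\in[k]$, let $h^i=h^s_\ell$ for any $\ell$ with $s_\ell(i)>0$. A Nash equilibrium $s$ is strong if there is no consumption profile $s'\ne s$ such that for every $i\in[k]$ and every $\ell$ with $s'_\ell(i)>s_\ell(i)$, $h^{s'}_\ell<h^i$. *)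

(* Defs.v *)
From Stdlib Require Import Reals Lra Lia.
Open Scope R_scope.

Fixpoint sumR (m : nat) (g : nat -> R) : R :=
  match m with
  | O => 0
  | S m' => sumR m' g + g m'
  end.

Definition cont_on (P : R -> Prop) (g : R -> R) : Prop :=
  forall x, P x -> forall eps, 0 < eps -> exists delta, 0 < delta /\
    forall y, P y -> Rabs (y - x) < delta -> Rabs (g y - g x) < eps.

Definition nonneg_half (x : R) : Prop := 0 <= x.
Definition unit_int (x : R) : Prop := 0 <= x <= 1.

(* A game: n resources (indices j < n), k player types (indices i < k),
   f j : cost function of resource j,
   Rs i j : whether j belongs to R^i,
   w i j : the weighting function f^i_j.
   A profile s : nat -> nat -> R with  s i j = s_j(i). *)

Definition is_profile (n k : nat) (Rs : nat -> nat -> bool)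
  (s : nat -> nat -> R) : Prop :=
  forall i, (i < k)%nat ->
    (forall j, (j < n)%nat -> 0 <= s i j) /\
    (forall j, (j < n)%nat -> Rs i j = false -> s i j = 0) /\
    sumR n (fun j => s i j) = 1.

Definition load (k : nat) (Rs : nat -> nat -> bool) (w : nat -> nat -> R -> R)
  (s : nat -> nat -> R) (j : nat) : R :=
  sumR k (fun i => if Rs i j then w i j (s i j) else 0).

Definition cost (k : nat) (f : nat -> R -> R) (Rs : nat -> nat -> bool)
  (w : nat -> nat -> R -> R) (s : nat -> nat -> R) (j : nat) : R :=
  f j (load k Rs w s j).

Definition is_NE (n k : nat) (f : nat -> R -> R) (Rs : nat -> nat -> bool)
  (w : nat -> nat -> R -> R) (s : nat -> nat -> R) : Prop :=
  is_profile n k Rs s /\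
  forall i l j, (i < k)%nat -> (l < n)%nat -> (j < n)%nat ->
    0 < s i l -> Rs i j = true -> cost k f Rs w s l <= cost k f Rs w s j.

Definition profile_neq (n k : nat) (s s' : nat -> nat -> R) : Prop :=
  exists i j, (i < k)%nat /\ (j < n)%nat /\ s' i j <> s i j.

(* strong NE: no deviation s' <> s such that every type i that increases its
   usage of a resource l gets there a cost strictly below h^i
   (h^i = cost of any resource m with s_m(i) > 0; these all coincide at a NE) *)
Definition is_strong_NE (n k : nat) (f : nat -> R -> R) (Rs : nat -> nat -> bool)
  (w : nat -> nat -> R -> R) (s : nat -> nat -> R) : Prop :=
  is_NE n k f Rs w s /\
  ~ exists s', is_profile n k Rs s' /\ profile_neq n k s s' /\
      forall i l m, (i < k)%nat -> (l < n)%nat -> (m < n)%nat ->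
        s i l < s' i l -> 0 < s i m ->
        cost k f Rs w s' l < cost k f Rs w s m.

(* Main.v *)
Require Import Defs.
From Stdlib Require Import Reals.
Open Scope R_scope.
From Stdlib Require Import Lra Lia List ClassicalEpsilon Classical.


Lemma sumR_ext m g h : (forall j, (j < m)%nat -> g j = h j) -> sumR m g = sumR m h.
Proof. induction m; simpl; intros H; auto. rewrite IHm by (intros; apply H; lia). rewrite H by lia. auto. Qed.

Lemma sumR_le m g h : (forall j, (j < m)%nat -> g j <= h j) -> sumR m g <= sumR m h.
Proof. induction m; simpl; intros H; [lra|]. assert (H1 := IHm (fun j Hj => H j ltac:(lia))). assert (H2 := H m ltac:(lia)). lra. Qed.

Lemma sumR_lt m g h j0 : (j0 < m)%nat -> (forall j, (j < m)%nat -> g j <= h j) -> g j0 < h j0 -> sumR m g < sumR m h.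
Proof. induction m; simpl; intros Hj H Hlt; [lia|].
  destruct (Nat.eq_dec j0 m) as [->|Hne].
  - assert (H1 := sumR_le m g h (fun j Hj => H j ltac:(lia))). lra.
  - assert (H1 := IHm ltac:(lia) (fun j Hj => H j ltac:(lia)) Hlt). assert (H2 := H m ltac:(lia)). lra. Qed.

Lemma sumR_plus m g h : sumR m (fun j => g j + h j) = sumR m g + sumR m h.
Proof. induction m; simpl; [lra|]. rewrite IHm. lra. Qed.

Lemma sumR_minus m g h : sumR m (fun j => g j - h j) = sumR m g - sumR m h.
Proof. induction m; simpl; [lra|]. rewrite IHm. lra. Qed.

Lemma sumR_const0 m : sumR m (fun _ => 0) = 0.
Proof. induction m; simpl; lra. Qed.

Lemma sumR_ind m j0 x : (j0 < m)%nat -> sumR m (fun j => if Nat.eq_dec j j0 then x else 0) = x.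
Proof. induction m; simpl; intros H; [lia|].
  destruct (Nat.eq_dec m j0) as [->|Hne].
  - rewrite (sumR_ext _ _ (fun _ => 0)). rewrite sumR_const0. lra.
    intros j Hj. destruct (Nat.eq_dec j j0); [lia|auto].
  - rewrite IHm by lia. lra. Qed.

Lemma sumR_split m j0 (g : nat -> R) : (j0 < m)%nat ->
  sumR m g = g j0 + sumR m (fun j => if Nat.eq_dec j j0 then 0 else g j).
Proof. intros H.
  assert (E := sumR_ind m j0 (g j0) H). rewrite <- E at 1. rewrite <- sumR_plus.
  apply sumR_ext. intros j Hj. destruct (Nat.eq_dec j j0); subst; lra. Qed.

Lemma sumR_nonneg m g : (forall j, (j < m)%nat -> 0 <= g j) -> 0 <= sumR m g.
Proof. intros H. rewrite <- (sumR_const0 m). apply sumR_le. auto. Qed.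

Lemma sumR_abs m g : Rabs (sumR m g) <= sumR m (fun j => Rabs (g j)).
Proof. induction m; simpl. rewrite Rabs_R0; lra.
  eapply Rle_trans. apply Rabs_triang. lra. Qed.

Lemma sumR_bound m g e : (forall j, (j < m)%nat -> Rabs (g j) <= e) -> Rabs (sumR m g) <= INR m * e.
Proof. intros H. eapply Rle_trans. apply sumR_abs.
  induction m; simpl. lra. assert (H1 := IHm (fun j Hj => H j ltac:(lia))). assert (H2 := H m ltac:(lia)).
  destruct m; simpl in *; lra. Qed.

Lemma entry_le_sum m g j0 : (j0 < m)%nat -> (forall j, (j < m)%nat -> 0 <= g j) -> g j0 <= sumR m g.
Proof. intros Hj H. rewrite (sumR_split m j0 g Hj).
  assert (0 <= sumR m (fun j => if Nat.eq_dec j j0 then 0 else g j)).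
  apply sumR_nonneg. intros j Hj'. destruct (Nat.eq_dec j j0); [lra|auto]. lra. Qed.


Fixpoint cnt (m : nat) (c : nat -> R) (th : R) : nat :=
  match m with
  | O => O
  | S m' => (cnt m' c th + if Rle_dec th (c m') then 1 else 0)%nat
  end.

Definition prec (m : nat) (c' c : nat -> R) : Prop :=
  exists th, (cnt m c' th < cnt m c th)%nat /\
    forall th', th <= th' -> (cnt m c' th' <= cnt m c th')%nat.

Lemma cnt_le m c' c th : (forall j, (j < m)%nat -> th <= c' j -> th <= c j) ->
  (cnt m c' th <= cnt m c th)%nat.
Proof. induction m; simpl; intros H; [lia|].
  assert (H1 := IHm (fun j Hj => H j ltac:(lia))).
  destruct (Rle_dec th (c' m)); destruct (Rle_dec th (c m)); try lia.
  exfalso. apply n. apply H; auto. Qed.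

Lemma cnt_lt m c' c th l : (l < m)%nat -> (forall j, (j < m)%nat -> th <= c' j -> th <= c j) ->
  ~ th <= c' l -> th <= c l -> (cnt m c' th < cnt m c th)%nat.
Proof. induction m; simpl; intros Hl H H1 H2; [lia|].
  destruct (Nat.eq_dec l m) as [->|Hne].
  - assert (H3 := cnt_le m c' c th (fun j Hj => H j ltac:(lia))).
    destruct (Rle_dec th (c' m)); destruct (Rle_dec th (c m)); try lia; tauto.
  - assert (H3 := IHm ltac:(lia) (fun j Hj => H j ltac:(lia)) H1 H2).
    destruct (Rle_dec th (c' m)); destruct (Rle_dec th (c m)); try lia.
    exfalso. apply n. apply H; auto. Qed.

Lemma prec_irrefl m c : ~ prec m c c.
Proof. intros [th [H _]]. lia. Qed.

Lemma prec_trans m a b c : prec m a b -> prec m b c -> prec m a c.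
Proof. intros [t1 [H1 H1']] [t2 [H2 H2']].
  destruct (Rle_dec t2 t1).
  - exists t1. split. specialize (H2' t1 r). lia.
    intros th Hth. specialize (H1' th Hth). specialize (H2' th ltac:(lra)). lia.
  - exists t2. split. specialize (H1' t2 ltac:(lra)). lia.
    intros th Hth. specialize (H1' th ltac:(lra)). specialize (H2' th Hth). lia. Qed.

Lemma prec_crit m c' c l : (l < m)%nat -> c' l < c l ->
  (forall j, (j < m)%nat -> c' j <= c j \/ c' j < c l) -> prec m c' c.
Proof. intros Hl Hlt H. exists (c l). split.
  - apply cnt_lt with l; auto; [|lra|lra].
    intros j Hj Hth. destruct (H j Hj); lra.
  - intros th Hth. apply cnt_le. intros j Hj Hj'. destruct (H j Hj); lra. Qed.

Lemma prec_ext m a a' b b' : (forall j, (j < m)%nat -> a j = a' j) -> (forall j, (j < m)%nat -> b j = b' j) ->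
  prec m a b -> prec m a' b'.
Proof.
  assert (E : forall c c' th, (forall j, (j < m)%nat -> c j = c' j) -> cnt m c th = cnt m c' th).
  { intros c c' th H. induction m; simpl; auto. rewrite IHm by (intros; apply H; lia).
    rewrite H by lia. auto. }
  intros Ha Hb [th [H1 H2]]. exists th. rewrite <- (E a a' th Ha), <- (E b b' th Hb). split; auto.
  intros th' Ht. rewrite <- (E a a' th' Ha), <- (E b b' th' Hb). auto. Qed.

Lemma list_min {A : Type} (Rel : A -> A -> Prop) (irr : forall x, ~ Rel x x)
  (tr : forall x y z, Rel x y -> Rel y z -> Rel x z) (P : A -> Prop) (L : list A) :
  (exists x, In x L /\ P x) -> exists x, In x L /\ P x /\ forall y, In y L -> P y -> ~ Rel y x.
Proof.
  induction L as [|a L IH]; intros [x [Hx HP]]; [destruct Hx|].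
  destruct (classic (exists x, In x L /\ P x)) as [Hex|Hno].
  - destruct (IH Hex) as [m [Hm [HPm Hmin]]].
    destruct (classic (P a /\ Rel a m)) as [[HPa Ham]|Hna].
    + exists a. split; [left; auto|]. split; auto. intros y [Heq|Hy] HPy Hya. subst. apply (irr y Hya).
      apply (Hmin y Hy HPy). eapply tr; eauto.
    + exists m. split; [right; auto|]. split; auto. intros y [Heq|Hy] HPy Hym. subst.
      apply Hna; auto. apply (Hmin y Hy HPy Hym).
  - destruct Hx as [Hx|Hx]; [|exfalso; apply Hno; eauto]. subst a.
    exists x. split; [left; auto|]. split; auto. intros y [Heq|Hy] HPy Hyx. subst. apply (irr y Hyx).
    apply Hno; eauto. Qed.

Definition upd (g : nat -> nat -> nat) (i j a : nat) : nat -> nat -> nat :=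
  fun i' j' => if Nat.eq_dec i' i then if Nat.eq_dec j' j then a else g i' j' else g i' j'.

Fixpoint allf (D : nat) (ps : list (nat * nat)) : list (nat -> nat -> nat) :=
  match ps with
  | nil => (fun _ _ => O) :: nil
  | (i, j) :: ps' => flat_map (fun g => map (fun a => upd g i j a) (seq 0 (S D))) (allf D ps')
  end.

Lemma allf_spec D ps (Rel : nat -> nat -> nat -> Prop) :
  (forall i j, In (i, j) ps -> exists a, (a <= D)%nat /\ Rel i j a) ->
  exists h, In h (allf D ps) /\ forall i j, In (i, j) ps -> Rel i j (h i j).
Proof.
  induction ps as [|[i j] ps IH]; intros H.
  - exists (fun _ _ => O). split; [left; auto|]. intros i j [].
  - destruct IH as [h [Hin Hh]]. { intros i' j' Hp. apply H. right; auto. }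
    destruct (H i j (or_introl eq_refl)) as [a [Ha HR]].
    exists (upd h i j a). split.
    + change (In (upd h i j a) (flat_map (fun g => map (fun a => upd g i j a) (seq 0 (S D))) (allf D ps))).
      apply in_flat_map. exists h. split; auto. apply (in_map (fun a => upd h i j a)). apply in_seq. lia.
    + intros i' j' [Heq|Hp]; unfold upd.
      * injection Heq; intros H1 H2; subst i' j'. destruct (Nat.eq_dec i i); [|lia]. destruct (Nat.eq_dec j j); [auto|lia].
      * destruct (Nat.eq_dec i' i); [destruct (Nat.eq_dec j' j)|]; subst; auto. Qed.

Definition isg (D : nat) (v : R) : Prop := exists a : nat, v * INR D = INR a.

Lemma isg_add D u v : isg D u -> isg D v -> isg D (u + v).
Proof. intros [a Ha] [b Hb]. exists (a + b)%nat. rewrite plus_INR. nra. Qed.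

Lemma isg_0 D : isg D 0.
Proof. exists O. simpl. lra. Qed.

Lemma isg_sumR D m g : (forall j, (j < m)%nat -> isg D (g j)) -> isg D (sumR m g).
Proof. induction m; simpl; intros H. apply isg_0. apply isg_add. apply IHm; intros; apply H; lia. apply H; lia. Qed.

Lemma isg_one_minus D v : isg D v -> 0 <= 1 - v -> isg D (1 - v).
Proof. intros [a Ha] H. exists (D - a)%nat.
  destruct (Nat.eq_dec D O) as [->|HD].
  - simpl in *. rewrite Rmult_0_r in *. destruct a; simpl; [lra|]. rewrite S_INR in Ha. assert (0 <= INR a) by apply pos_INR. lra.
  - assert (0 < INR D) by (apply lt_0_INR; lia).
    assert (INR a <= INR D) by nra.
    apply INR_le in H1. rewrite minus_INR by auto. nra. Qed.

Lemma isg_ge D v : (0 < D)%nat -> isg D v -> 0 < v -> 1 / INR D <= v.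
Proof. intros HD [a Ha] Hv. assert (0 < INR D) by (apply lt_0_INR; lia).
  destruct a. simpl in Ha. nra.
  assert (1 <= INR (S a)) by (rewrite S_INR; assert (0 <= INR a) by apply pos_INR; lra).
  apply Rmult_le_reg_r with (INR D); auto. field_simplify; lra. Qed.

Lemma isg_pm D v : (0 < D)%nat -> isg D v -> 0 < v -> isg D (v - 1 / INR D) /\ isg D (v + 1 / INR D).
Proof. intros HD [a Ha] Hv. assert (0 < INR D) by (apply lt_0_INR; lia).
  destruct a. simpl in Ha. nra. split.
  - exists a. rewrite S_INR in Ha. rewrite Rmult_minus_distr_r. replace (1 / INR D * INR D) with 1 by (field; lra). lra.
  - exists (S (S a)). rewrite S_INR. rewrite Rmult_plus_distr_r. replace (1 / INR D * INR D) with 1 by (field; lra). lra. Qed.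

Lemma floor_ex (D : nat) (x : R) : exists a : nat, 0 <= x -> INR a <= x * INR D < INR a + 1.
Proof.
  destruct (classic (0 <= x)) as [Hx|Hx]; [|exists O; tauto].
  assert (Hd : 0 <= x * INR D) by (apply Rmult_le_pos; auto; apply pos_INR).
  destruct (INR_archimed 1 (x * INR D) ltac:(lra)) as [N HN]. rewrite Rmult_1_r in HN.
  assert (forall N, x * INR D < INR N -> exists a, INR a <= x * INR D < INR a + 1).
  { induction N0; intros H. simpl in H; lra.
    destruct (Rlt_dec (x * INR D) (INR N0)). auto. exists N0. rewrite S_INR in H. lra. }
  destruct (H N) as [a Ha]; [lra|]. exists a; auto. Qed.


Section Game.
Variables (n k : nat) (f : nat -> R -> R) (Rs : nat -> nat -> bool) (w : nat -> nat -> R -> R).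
Hypothesis Hf_mono : forall j, (j < n)%nat -> forall x y, 0 <= x -> x <= y -> f j x <= f j y.
Hypothesis Hw_nonneg : forall i j, (i < k)%nat -> (j < n)%nat -> Rs i j = true ->
     forall x, 0 <= x <= 1 -> 0 <= w i j x.
Hypothesis Hw_incr : forall i j, (i < k)%nat -> (j < n)%nat -> Rs i j = true ->
     forall x y, 0 <= x -> x < y -> y <= 1 -> w i j x < w i j y.
Hypothesis Hf_cont : forall j, (j < n)%nat -> cont_on nonneg_half (f j).
Hypothesis Hw_cont : forall i j, (i < k)%nat -> (j < n)%nat -> Rs i j = true ->
     cont_on unit_int (w i j).

Definition inbox (t : nat -> nat -> R) := forall i j, (i < k)%nat -> (j < n)%nat -> 0 <= t i j <= 1.

Lemma profile_box t : is_profile n k Rs t -> inbox t.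
Proof. intros H i j Hi Hj. destruct (H i Hi) as [H1 [H2 H3]]. split. auto.
  rewrite <- H3. apply entry_le_sum; auto. Qed.

Lemma load_ext t t' j : (forall i, (i < k)%nat -> t i j = t' i j) -> load k Rs w t j = load k Rs w t' j.
Proof. intros H. unfold load. apply sumR_ext. intros i Hi. rewrite H; auto. Qed.

Lemma cost_ext t t' j : (forall i, (i < k)%nat -> t i j = t' i j) -> cost k f Rs w t j = cost k f Rs w t' j.
Proof. intros H. unfold cost. rewrite (load_ext t t' j H). auto. Qed.

Lemma profile_ext t t' : (forall i j, (i < k)%nat -> (j < n)%nat -> t i j = t' i j) ->
  is_profile n k Rs t -> is_profile n k Rs t'.
Proof. intros E H i Hi. destruct (H i Hi) as [H1 [H2 H3]]. split; [|split].
  - intros j Hj. rewrite <- E; auto.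
  - intros j Hj Hr. rewrite <- E; auto.
  - rewrite <- H3. symmetry. apply sumR_ext. intros j Hj. apply E; auto. Qed.

Lemma load_nonneg t j : (j < n)%nat -> inbox t -> 0 <= load k Rs w t j.
Proof. intros Hj Hb. unfold load. apply sumR_nonneg. intros i Hi.
  destruct (Rs i j) eqn:E; [|lra]. apply Hw_nonneg; auto. Qed.

Lemma w_mono i j x y : (i < k)%nat -> (j < n)%nat -> Rs i j = true -> 0 <= x -> x <= y -> y <= 1 -> w i j x <= w i j y.
Proof. intros. destruct (Req_dec x y) as [->|]; [lra|]. left. apply Hw_incr; auto; lra. Qed.

Lemma load_le t t' j : (j < n)%nat -> inbox t -> inbox t' ->
  (forall i, (i < k)%nat -> t i j <= t' i j) -> load k Rs w t j <= load k Rs w t' j.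
Proof. intros Hj Hb Hb' H. unfold load. apply sumR_le. intros i Hi.
  destruct (Rs i j) eqn:E; [|lra]. destruct (Hb i j Hi Hj), (Hb' i j Hi Hj). apply w_mono; auto. Qed.

Lemma load_lt t t' j i0 : (j < n)%nat -> (i0 < k)%nat -> Rs i0 j = true -> inbox t -> inbox t' ->
  (forall i, (i < k)%nat -> t i j <= t' i j) -> t i0 j < t' i0 j -> load k Rs w t j < load k Rs w t' j.
Proof. intros Hj Hi0 HR Hb Hb' H Hlt. unfold load. apply sumR_lt with i0; auto.
  - intros i Hi. destruct (Rs i j) eqn:E; [|lra]. destruct (Hb i j Hi Hj), (Hb' i j Hi Hj). apply w_mono; auto.
  - rewrite HR. destruct (Hb i0 j Hi0 Hj), (Hb' i0 j Hi0 Hj). apply Hw_incr; auto. Qed.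

Lemma cost_le t t' j : (j < n)%nat -> inbox t -> inbox t' ->
  (forall i, (i < k)%nat -> t i j <= t' i j) -> cost k f Rs w t j <= cost k f Rs w t' j.
Proof. intros. unfold cost. apply Hf_mono; auto. apply load_nonneg; auto. apply load_le; auto. Qed.

Lemma sumR_cont m (G : nat -> R -> R) (x : nat -> R) (Dm : R -> Prop) :
 (forall i, (i < m)%nat -> Dm (x i)) ->
 (forall i, (i < m)%nat -> forall eps, 0 < eps -> exists d, 0 < d /\ forall y, Dm y -> Rabs (y - x i) < d -> Rabs (G i y - G i (x i)) < eps) ->
 forall eps, 0 < eps -> exists d, 0 < d /\ forall y : nat -> R, (forall i, (i < m)%nat -> Dm (y i)) ->
   (forall i, (i < m)%nat -> Rabs (y i - x i) < d) ->
   Rabs (sumR m (fun i => G i (y i)) - sumR m (fun i => G i (x i))) < eps.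
Proof.
  induction m; intros Hx HG eps Heps.
  - exists 1. split; [lra|]. intros. simpl. rewrite Rminus_0_r, Rabs_R0. auto.
  - destruct (IHm (fun i Hi => Hx i ltac:(lia)) (fun i Hi => HG i ltac:(lia)) (eps/2) ltac:(lra)) as [d1 [Hd1 H1]].
    destruct (HG m ltac:(lia) (eps/2) ltac:(lra)) as [d2 [Hd2 H2]].
    exists (Rmin d1 d2). split. apply Rmin_pos; auto.
    intros y Hy Hyd. simpl.
    assert (A1 := H1 y (fun i Hi => Hy i ltac:(lia)) (fun i Hi => Rlt_le_trans _ _ _ (Hyd i ltac:(lia)) (Rmin_l _ _))).
    assert (A2 := H2 (y m) (Hy m ltac:(lia)) (Rlt_le_trans _ _ _ (Hyd m ltac:(lia)) (Rmin_r _ _))).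
    replace (sumR m (fun i => G i (y i)) + G m (y m) - (sumR m (fun i => G i (x i)) + G m (x m)))
      with ((sumR m (fun i => G i (y i)) - sumR m (fun i => G i (x i))) + (G m (y m) - G m (x m))) by ring.
    eapply Rle_lt_trans. apply Rabs_triang. lra. Qed.

Lemma load_cont r j : (j < n)%nat -> inbox r -> forall eps, 0 < eps -> exists d, 0 < d /\
  forall t, inbox t -> (forall i, (i < k)%nat -> Rabs (t i j - r i j) < d) ->
  Rabs (load k Rs w t j - load k Rs w r j) < eps.
Proof. intros Hj Hr eps Heps.
  destruct (sumR_cont k (fun i y => if Rs i j then w i j y else 0) (fun i => r i j) unit_int) with (eps := eps)
    as [d [Hd H]]; auto.
  - intros i Hi. apply Hr; auto.
  - intros i Hi e He. destruct (Rs i j) eqn:E.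
    + destruct (Hw_cont i j Hi Hj E (r i j) (Hr i j Hi Hj) e He) as [d [Hd Hd']]. exists d. split; auto.
    + exists 1. split; [lra|]. intros. rewrite Rminus_0_r, Rabs_R0. auto.
  - exists d. split; auto. intros t Ht Htd. unfold load.
    apply (H (fun i => t i j)); auto. intros i Hi. apply Ht; auto. Qed.

Lemma cost_cont r j : (j < n)%nat -> inbox r -> forall eps, 0 < eps -> exists d, 0 < d /\
  forall t, inbox t -> (forall i, (i < k)%nat -> Rabs (t i j - r i j) < d) ->
  Rabs (cost k f Rs w t j - cost k f Rs w r j) < eps /\ Rabs (load k Rs w t j - load k Rs w r j) < 1.
Proof. intros Hj Hr eps Heps.
  destruct (Hf_cont j Hj (load k Rs w r j) (load_nonneg r j Hj Hr) eps Heps) as [d1 [Hd1 H1]].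
  destruct (load_cont r j Hj Hr (Rmin d1 1) ltac:(apply Rmin_pos; lra)) as [d [Hd H]].
  exists d. split; auto. intros t Ht Htd. assert (A := H t Ht Htd). split.
  - unfold cost. apply H1. apply load_nonneg; auto. eapply Rlt_le_trans; [apply A|apply Rmin_l].
  - eapply Rlt_le_trans; [apply A|apply Rmin_r]. Qed.

Definition cN (N : nat) (t : nat -> nat -> R) (j : nat) : R :=
  cost k f Rs w t j + load k Rs w t j / INR (S N).

Lemma inv_small eps : 0 < eps -> exists N0, forall N, (N0 <= N)%nat -> 1 / INR (S N) < eps.
Proof. intros He. destruct (archimed_cor1 eps He) as [N0 [H1 H2]]. exists N0. intros N HN.
  assert (INR N0 <= INR (S N)) by (apply le_INR; lia). assert (0 < INR N0) by (apply lt_0_INR; lia).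
  unfold Rdiv. rewrite Rmult_1_l. eapply Rle_lt_trans; [|apply H1]. apply Rinv_le_contravar; auto. Qed.

Lemma cN_cont1 r j : (j < n)%nat -> inbox r -> forall eps, 0 < eps -> exists d N0, 0 < d /\
  forall N t, (N0 <= N)%nat -> inbox t -> (forall i, (i < k)%nat -> Rabs (t i j - r i j) < d) ->
  Rabs (cN N t j - cost k f Rs w r j) < eps.
Proof. intros Hj Hr eps Heps.
  destruct (cost_cont r j Hj Hr (eps/2) ltac:(lra)) as [d [Hd H]].
  set (L := load k Rs w r j). assert (HL : 0 <= L) by (apply load_nonneg; auto).
  destruct (inv_small (eps / 2 / (L + 1))) as [N0 HN0]. { apply Rdiv_lt_0_compat; lra. }
  exists d, N0. split; auto. intros N t HN Ht Htd. destruct (H t Ht Htd) as [A1 A2].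
  unfold cN. assert (HN1 := HN0 N HN).
  assert (0 < INR (S N)) by (apply lt_0_INR; lia).
  assert (Hlt : 0 <= load k Rs w t j) by (apply load_nonneg; auto).
  assert (load k Rs w t j < L + 1) by (apply Rabs_def2 in A2; fold L in A2; lra).
  assert (load k Rs w t j / INR (S N) < eps / 2).
  { unfold Rdiv in *. rewrite Rmult_1_l in HN1.
    apply Rle_lt_trans with ((L + 1) * / INR (S N)).
    apply Rmult_le_compat_r. left; apply Rinv_0_lt_compat; auto. lra.
    apply Rmult_lt_reg_r with (/ (L+1)). apply Rinv_0_lt_compat; lra.
    replace ((L + 1) * / INR (S N) * / (L + 1)) with (/ INR (S N)) by (field; lra). lra. }
  assert (0 <= load k Rs w t j / INR (S N)) by (unfold Rdiv; apply Rmult_le_pos; [lra|left; apply Rinv_0_lt_compat; lra]).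
  apply Rabs_def2 in A1. apply Rabs_def1; lra. Qed.

Lemma fin_uniform (M : nat) (P : nat -> R -> nat -> Prop) :
  (forall p d N0 d' N0', P p d N0 -> 0 < d' <= d -> (N0 <= N0')%nat -> P p d' N0') ->
  (forall p, (p < M)%nat -> exists d N0, 0 < d /\ P p d N0) ->
  exists d N0, 0 < d /\ forall p, (p < M)%nat -> P p d N0.
Proof. intros Hmon. induction M; intros H.
  - exists 1, O. split; [lra|]. intros; lia.
  - destruct IHM as [d1 [N1 [Hd1 H1]]]. intros p Hp; apply H; lia.
    destruct (H M ltac:(lia)) as [d2 [N2 [Hd2 H2]]].
    exists (Rmin d1 d2), (N1 + N2)%nat. split. apply Rmin_pos; auto.
    intros p Hp. destruct (Nat.eq_dec p M) as [->|Hne].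
    + apply (Hmon M d2 N2); [exact H2| split; [apply Rmin_pos; auto|apply Rmin_r] | lia].
    + apply (Hmon p d1 N1); [apply H1; lia| split; [apply Rmin_pos; auto|apply Rmin_l] | lia]. Qed.

Lemma cN_cont r : inbox r -> forall eps, 0 < eps -> exists d N0, 0 < d /\
  forall N t, (N0 <= N)%nat -> inbox t -> (forall i j, (i < k)%nat -> (j < n)%nat -> Rabs (t i j - r i j) < d) ->
  forall j, (j < n)%nat -> Rabs (cN N t j - cost k f Rs w r j) < eps.
Proof. intros Hr eps Heps.
  destruct (fin_uniform n (fun j d N0 => forall N t, (N0 <= N)%nat -> inbox t ->
     (forall i, (i < k)%nat -> Rabs (t i j - r i j) < d) -> Rabs (cN N t j - cost k f Rs w r j) < eps))
   as [d [N0 [Hd H]]].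
  - intros p d N0 d' N0' H [Hd' Hdd] HN N t HN' Ht Htd. apply H; auto; [lia|]. intros i Hi. specialize (Htd i Hi). lra.
  - intros j Hj. apply cN_cont1; auto.
  - exists d, N0. split; [auto|]. intros N t HN Ht Htd j Hj. apply H; auto. Qed.

End Game.


Lemma div_mul_cancel x d : 0 < d -> x / d * d = x.
Proof. intros. field. lra. Qed.

Section Grid.
Variables (n k : nat) (f : nat -> R -> R) (Rs : nat -> nat -> bool) (w : nat -> nat -> R -> R).
Hypothesis HR_ne : forall i, (i < k)%nat -> exists j, (j < n)%nat /\ Rs i j = true.

Definition GP (N : nat) (t : nat -> nat -> R) : Prop :=
  is_profile n k Rs t /\ forall i j, (i < k)%nat -> (j < n)%nat -> isg (S N) (t i j).

Definition jsel (i : nat) : nat :=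
  match Compare_dec.lt_dec i k with
  | left H => proj1_sig (constructive_indefinite_description _ (HR_ne i H))
  | right _ => O
  end.

Lemma jsel_spec i : (i < k)%nat -> (jsel i < n)%nat /\ Rs i (jsel i) = true.
Proof. intros Hi. unfold jsel. destruct (Compare_dec.lt_dec i k); [|lia].
  destruct (constructive_indefinite_description _ (HR_ne i l)) as [j Hj]. simpl. auto. Qed.

Lemma in_ps i j : In (i, j) (list_prod (seq 0 k) (seq 0 n)) <-> (i < k)%nat /\ (j < n)%nat.
Proof. rewrite in_prod_iff, !in_seq. lia. Qed.

Lemma exists_min N : exists s, GP N s /\ forall t, GP N t -> ~ prec n (cN k f Rs w N t) (cN k f Rs w N s).
Proof.
  set (D := S N). assert (HD : 0 < INR D) by (apply lt_0_INR; unfold D; lia).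
  set (ps := list_prod (seq 0 k) (seq 0 n)).
  set (gp := fun (a : nat -> nat -> nat) i j => INR (a i j) / INR D).
  set (P := fun a => is_profile n k Rs (gp a)).
  set (Rel := fun a b => prec n (cN k f Rs w N (gp a)) (cN k f Rs w N (gp b))).
  assert (Hrep : forall t, GP N t -> exists h, In h (allf D ps) /\ forall i j, (i < k)%nat -> (j < n)%nat -> gp h i j = t i j).
  { intros t [Hp Hg]. destruct (allf_spec D ps (fun i j a => t i j * INR D = INR a)) as [h [Hh Hh']].
    - intros i j Hij. apply in_ps in Hij. destruct Hij as [Hi Hj]. destruct (Hg i j Hi Hj) as [a Ha].
      exists a. split; auto. apply INR_le. rewrite <- Ha.
      destruct (profile_box n k Rs t Hp i j Hi Hj) as [Hb1 Hb2]. rewrite <- Rmult_1_l. apply Rmult_le_compat_r; lra.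
    - exists h. split; auto. intros i j Hi Hj. specialize (Hh' i j (proj2 (in_ps i j) (conj Hi Hj))).
      unfold gp. rewrite <- Hh'. field. lra. }
  destruct (list_min Rel (fun x => prec_irrefl _ _) (fun x y z => prec_trans _ _ _ _) P (allf D ps)) as [a [Ha [HPa Hmin]]].
  - set (a0 := fun i j => if Nat.eq_dec j (jsel i) then D else O).
    assert (HP0 : GP N (gp a0)).
    { split.
      - intros i Hi. destruct (jsel_spec i Hi) as [Hj1 Hj2]. split; [|split].
        + intros j Hj. unfold gp. apply Rmult_le_pos. apply pos_INR. left; apply Rinv_0_lt_compat; auto.
        + intros j Hj HR. unfold gp, a0. destruct (Nat.eq_dec j (jsel i)). subst; congruence. simpl; lra.
        + rewrite <- (sumR_ind n (jsel i) 1 Hj1). apply sumR_ext. intros j Hj. unfold gp, a0.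
          destruct (Nat.eq_dec j (jsel i)). field; lra. simpl; lra.
      - intros i j Hi Hj. exists (a0 i j). unfold gp. apply div_mul_cancel; auto. }
    destruct (Hrep _ HP0) as [h [Hh Hh']]. exists h. split; auto.
    unfold P. apply profile_ext with (gp a0). intros; symmetry; auto. apply HP0.
  - exists (gp a). split.
    + split; auto. intros i j Hi Hj. exists (a i j). unfold gp. apply div_mul_cancel; auto.
    + intros t Ht Hprec. destruct (Hrep t Ht) as [h [Hh Hh']].
      apply (Hmin h Hh).
      * unfold P. apply profile_ext with t. intros; symmetry; auto. apply Ht.
      * unfold Rel. revert Hprec. apply prec_ext.
        -- intros j Hj. unfold cN. rewrite (cost_ext k f Rs w t (gp h) j), (load_ext k Rs w t (gp h) j); auto;
           intros i Hi; symmetry; apply Hh'; auto.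
        -- intros j Hj. auto.
Qed.

End Grid.


Lemma small_zero x : (forall eps, 0 < eps -> Rabs x < eps) -> x = 0.
Proof. intros H. destruct (Req_dec x 0); auto. exfalso. assert (0 < Rabs x) by (apply Rabs_pos_lt; auto).
  specialize (H (Rabs x) H1). lra. Qed.

Lemma isg_p1 D v : isg D v -> isg D (v + 1 / INR D).
Proof. intros [a Ha]. destruct (Nat.eq_dec D O) as [->|HD].
  - exists a. simpl in *. lra.
  - assert (0 < INR D) by (apply lt_0_INR; lia). exists (S a). rewrite S_INR, Rmult_plus_distr_r.
    replace (1 / INR D * INR D) with 1 by (field; lra). lra. Qed.

Definition shift (t : nat -> nat -> R) (i l j : nat) (x : R) : nat -> nat -> R :=
  fun i' j' => if Nat.eq_dec i' i then (if Nat.eq_dec j' l then t i' j' - x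
     else if Nat.eq_dec j' j then t i' j' + x else t i' j') else t i' j'.

Lemma shift_sum n t i l j x : (l < n)%nat -> (j < n)%nat -> l <> j ->
  sumR n (shift t i l j x i) = sumR n (t i).
Proof. intros Hl Hj Hlj.
  transitivity (sumR n (fun j' => t i j' - (if Nat.eq_dec j' l then x else 0) + (if Nat.eq_dec j' j then x else 0))).
  - apply sumR_ext. intros j' Hj'. unfold shift. destruct (Nat.eq_dec i i); [|lia].
    destruct (Nat.eq_dec j' l); destruct (Nat.eq_dec j' j); subst; try lia; lra.
  - rewrite sumR_plus, sumR_minus, sumR_ind, sumR_ind by auto. lra. Qed.

Section Main.
Variables (n k : nat) (f : nat -> R -> R) (Rs : nat -> nat -> bool) (w : nat -> nat -> R -> R).
Hypothesis Hf_mono : forall j, (j < n)%nat -> forall x y, 0 <= x -> x <= y -> f j x <= f j y.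
Hypothesis HR_ne : forall i, (i < k)%nat -> exists j, (j < n)%nat /\ Rs i j = true.
Hypothesis Hw_nonneg : forall i j, (i < k)%nat -> (j < n)%nat -> Rs i j = true ->
     forall x, 0 <= x <= 1 -> 0 <= w i j x.
Hypothesis Hw_incr : forall i j, (i < k)%nat -> (j < n)%nat -> Rs i j = true ->
     forall x y, 0 <= x -> x < y -> y <= 1 -> w i j x < w i j y.
Hypothesis Hf_cont : forall j, (j < n)%nat -> cont_on nonneg_half (f j).
Hypothesis Hw_cont : forall i j, (i < k)%nat -> (j < n)%nat -> Rs i j = true ->
     cont_on unit_int (w i j).
Variables (sg : nat -> nat -> nat -> R) (s : nat -> nat -> R).
Hypothesis Hsg : forall N, GP n k Rs N (sg N).
Hypothesis Hmin : forall N t, GP n k Rs N t -> ~ prec n (cN k f Rs w N t) (cN k f Rs w N (sg N)).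
Hypothesis Hcl : forall eps, 0 < eps -> forall N0, exists N, (N0 <= N)%nat /\
   forall i j, (i < k)%nat -> (j < n)%nat -> Rabs (sg N i j - s i j) < eps.

Lemma s_profile : is_profile n k Rs s.
Proof. intros i Hi. split; [|split].
  - intros j Hj. destruct (Rle_dec 0 (s i j)); auto. exfalso.
    destruct (Hcl (- s i j) ltac:(lra) O) as [N [_ HN]]. specialize (HN i j Hi Hj).
    destruct (Hsg N) as [Hp _]. destruct (Hp i Hi) as [H1 _]. specialize (H1 j Hj).
    apply Rabs_def2 in HN. lra.
  - intros j Hj HR. apply small_zero. intros eps Heps.
    destruct (Hcl eps Heps O) as [N [_ HN]]. specialize (HN i j Hi Hj).
    destruct (Hsg N) as [Hp _]. destruct (Hp i Hi) as [_ [H2 _]]. rewrite (H2 j Hj HR) in HN.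
    rewrite Rabs_minus_sym, Rminus_0_r in HN. auto.
  - assert (E : sumR n (fun j => s i j) - 1 = 0); [|lra]. apply small_zero. intros eps Heps.
    assert (Hn : 0 < INR n + 1) by (assert (0 <= INR n) by apply pos_INR; lra).
    destruct (Hcl (eps / (INR n + 1)) ltac:(apply Rdiv_lt_0_compat; lra) O) as [N [_ HN]].
    destruct (Hsg N) as [Hp _]. destruct (Hp i Hi) as [_ [_ H3]]. rewrite <- H3.
    rewrite <- sumR_minus. eapply Rle_lt_trans. apply sumR_bound with (e := eps / (INR n + 1)).
    intros j Hj. rewrite Rabs_minus_sym. left; apply HN; auto.
    replace (INR n * (eps / (INR n + 1))) with (eps - eps / (INR n + 1)) by (field; lra).
    assert (0 < eps / (INR n + 1)) by (apply Rdiv_lt_0_compat; lra). lra. Qed.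

Lemma s_box : inbox n k s.
Proof. apply (profile_box n k Rs), s_profile. Qed.

Lemma sg_box N : inbox n k (sg N).
Proof. apply (profile_box n k Rs), Hsg. Qed.

Lemma s_NE : is_NE n k f Rs w s.
Proof.
  split. apply s_profile.
  intros i l j Hi Hl Hj Hsil HRij.
  destruct (Rle_dec (cost k f Rs w s l) (cost k f Rs w s j)) as [|Hne]; auto. exfalso.
  set (e := (cost k f Rs w s l - cost k f Rs w s j) / 3).
  assert (He : 0 < e) by (unfold e; lra).
  destruct (cN_cont n k f Rs w Hw_nonneg Hf_cont Hw_cont s s_box e He) as [d [N0 [Hd Hc]]].
  destruct (inv_small (d/2) ltac:(lra)) as [N1 HN1].
  destruct (Hcl (Rmin (d/2) (s i l / 2)) ltac:(apply Rmin_pos; lra) (N0 + N1)) as [N [HN Hclose]].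
  assert (Hlj : l <> j) by (intros ->; lra).
  assert (HRl : Rs i l = true).
  { destruct (Rs i l) eqn:E; auto. destruct (s_profile i Hi) as [_ [H2 _]]. rewrite (H2 l Hl E) in Hsil. lra. }
  set (D := S N). set (sN := sg N).
  assert (HD : 0 < INR D) by (apply lt_0_INR; unfold D; lia).
  assert (HDs : 1 / INR D < d / 2) by (apply HN1; lia).
  destruct (Hsg N) as [Hpr Hg]. fold sN in Hpr, Hg.
  assert (Hsl : 0 < sN i l).
  { specialize (Hclose i l Hi Hl). apply Rabs_def2 in Hclose. assert (Rmin (d/2) (s i l/2) <= s i l / 2) by apply Rmin_r.
    fold sN in Hclose. lra. }
  set (u := shift sN i l j (1 / INR D)).
  assert (Hu : GP n k Rs N u).
  { split.
    - intros i' Hi'. destruct (Hpr i' Hi') as [P1 [P2 P3]]. split; [|split].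
      + intros j' Hj'. unfold u, shift. destruct (Nat.eq_dec i' i); [subst i'|auto].
        destruct (Nat.eq_dec j' l); [subst j'|].
        * assert (1 / INR D <= sN i l) by (apply isg_ge; auto; unfold D; lia). lra.
        * destruct (Nat.eq_dec j' j); auto. assert (0 <= sN i j') by auto. assert (0 < 1 / INR D) by (apply Rdiv_lt_0_compat; lra). lra.
      + intros j' Hj' HR. unfold u, shift. destruct (Nat.eq_dec i' i); [subst i'|auto].
        destruct (Nat.eq_dec j' l); [subst; congruence|]. destruct (Nat.eq_dec j' j); [subst; congruence|]. auto.
      + unfold u. destruct (Nat.eq_dec i' i); [subst i'|].
        * rewrite shift_sum; auto.
        * rewrite <- P3. apply sumR_ext. intros j' Hj'. unfold shift. destruct (Nat.eq_dec i' i); [lia|auto].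
    - intros i' j' Hi' Hj'. unfold u, shift. destruct (Nat.eq_dec i' i); [subst i'|auto].
      destruct (Nat.eq_dec j' l); [subst j'|].
      + apply isg_pm; auto. unfold D; lia.
      + destruct (Nat.eq_dec j' j); auto. apply isg_p1; auto. }
  apply (Hmin N u Hu). fold sN.
  assert (Hub : inbox n k u) by (apply (profile_box n k Rs), Hu).
  assert (Hsb : inbox n k sN) by (apply sg_box).
  assert (Hdec : forall m, (m < n)%nat -> m <> j -> forall i', (i' < k)%nat -> u i' m <= sN i' m).
  { intros m Hm Hmj i' Hi'. unfold u, shift. destruct (Nat.eq_dec i' i); [|lra].
    destruct (Nat.eq_dec m l). assert (0 < 1 / INR D) by (apply Rdiv_lt_0_compat; lra). lra.
    destruct (Nat.eq_dec m j); [congruence|lra]. }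
  assert (HcN_le : forall m, (m < n)%nat -> m <> j -> cN k f Rs w N u m <= cN k f Rs w N sN m).
  { intros m Hm Hmj. unfold cN.
    assert (cost k f Rs w u m <= cost k f Rs w sN m) by (apply (cost_le n k); auto).
    assert (load k Rs w u m <= load k Rs w sN m) by (apply (load_le n k); auto).
    assert (0 < INR (S N)) by (apply lt_0_INR; lia).
    assert (load k Rs w u m / INR (S N) <= load k Rs w sN m / INR (S N)).
    { unfold Rdiv. apply Rmult_le_compat_r; auto. left; apply Rinv_0_lt_compat; auto. }
    lra. }
  apply prec_crit with l; auto.
  - unfold cN.
    assert (cost k f Rs w u l <= cost k f Rs w sN l) by (apply (cost_le n k); auto).
    assert (load k Rs w u l < load k Rs w sN l).
    { apply (load_lt n k) with i; auto. unfold u, shift. destruct (Nat.eq_dec i i); [|lia].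
      destruct (Nat.eq_dec l l); [|lia]. assert (0 < 1 / INR D) by (apply Rdiv_lt_0_compat; lra). lra. }
    assert (0 < INR (S N)) by (apply lt_0_INR; lia).
    assert (load k Rs w u l / INR (S N) < load k Rs w sN l / INR (S N)).
    { unfold Rdiv. apply Rmult_lt_compat_r; auto. apply Rinv_0_lt_compat; auto. }
    lra.
  - intros m Hm. destruct (Nat.eq_dec m j) as [->|Hmj]; [right|left; auto].
    assert (Hcl1 : forall i' j', (i' < k)%nat -> (j' < n)%nat -> Rabs (sN i' j' - s i' j') < d / 2).
    { intros i' j' Hi' Hj'. eapply Rlt_le_trans. apply Hclose; auto. apply Rmin_l. }
    assert (A1 := Hc N u ltac:(lia) Hub).
    assert (A2 := Hc N sN ltac:(lia) Hsb).
    assert (B1 : Rabs (cN k f Rs w N u j - cost k f Rs w s j) < e).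
    { apply A1; auto. intros i' j' Hi' Hj'. unfold u, shift.
      assert (C := Hcl1 i' j' Hi' Hj'). apply Rabs_def2 in C. assert (0 < 1 / INR D) by (apply Rdiv_lt_0_compat; lra).
      apply Rabs_def1; destruct (Nat.eq_dec i' i); try lra; destruct (Nat.eq_dec j' l); try lra;
        destruct (Nat.eq_dec j' j); lra. }
    assert (B2 : Rabs (cN k f Rs w N sN l - cost k f Rs w s l) < e).
    { apply A2; auto. intros i' j' Hi' Hj'. assert (C := Hcl1 i' j' Hi' Hj'). lra. }
    apply Rabs_def2 in B1. apply Rabs_def2 in B2. unfold e in *. lra.
Qed.

End Main.


Lemma fin_min (M : nat) (P : nat -> R -> Prop) :
  (forall p d d', P p d -> 0 < d' <= d -> P p d') ->
  (forall p, (p < M)%nat -> exists d, 0 < d /\ P p d) ->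
  exists d, 0 < d /\ forall p, (p < M)%nat -> P p d.
Proof. intros Hmon. induction M; intros H.
  - exists 1. split; [lra|]. intros; lia.
  - destruct IHM as [d1 [Hd1 H1]]. intros p Hp; apply H; lia.
    destruct (H M ltac:(lia)) as [d2 [Hd2 H2]].
    exists (Rmin d1 d2). split. apply Rmin_pos; auto.
    intros p Hp. destruct (Nat.eq_dec p M) as [->|Hne].
    + apply (Hmon M d2); [exact H2| split; [apply Rmin_pos; auto|apply Rmin_r]].
    + apply (Hmon p d1); [apply H1; lia| split; [apply Rmin_pos; auto|apply Rmin_l]]. Qed.

Lemma pos_entry n g : sumR n g = 1 -> exists m, (m < n)%nat /\ 0 < g m.
Proof. intros H. apply NNPP. intros Hn.
  assert (sumR n g <= sumR n (fun _ => 0)).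
  { apply sumR_le. intros j Hj. destruct (Rle_dec (g j) 0); auto. exfalso. apply Hn. exists j. split; auto. lra. }
  rewrite sumR_const0 in H0. lra. Qed.

Lemma same_if_no_incr n (a b : nat -> R) : sumR n a = 1 -> sumR n b = 1 ->
  (forall l, (l < n)%nat -> ~ a l < b l) -> forall l, (l < n)%nat -> b l = a l.
Proof. intros Ha Hb H l Hl. destruct (Req_dec (b l) (a l)); auto. exfalso.
  assert (sumR n b < sumR n a). apply sumR_lt with l; auto.
  intros j Hj. specialize (H j Hj). lra. specialize (H l Hl). lra. lra. Qed.

Lemma abs_le_b x a : Rabs x <= a -> - a <= x <= a.
Proof. intros H. split. assert (- x <= Rabs x) by (rewrite <- Rabs_Ropp; apply RRle_abs). lra.
  assert (x <= Rabs x) by apply RRle_abs. lra. Qed.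

Section Strong.
Variables (n k : nat) (f : nat -> R -> R) (Rs : nat -> nat -> bool) (w : nat -> nat -> R -> R).
Hypothesis Hf_mono : forall j, (j < n)%nat -> forall x y, 0 <= x -> x <= y -> f j x <= f j y.
Hypothesis HR_ne : forall i, (i < k)%nat -> exists j, (j < n)%nat /\ Rs i j = true.
Hypothesis Hw_nonneg : forall i j, (i < k)%nat -> (j < n)%nat -> Rs i j = true ->
     forall x, 0 <= x <= 1 -> 0 <= w i j x.
Hypothesis Hw_incr : forall i j, (i < k)%nat -> (j < n)%nat -> Rs i j = true ->
     forall x y, 0 <= x -> x < y -> y <= 1 -> w i j x < w i j y.
Hypothesis Hf_cont : forall j, (j < n)%nat -> cont_on nonneg_half (f j).
Hypothesis Hw_cont : forall i j, (i < k)%nat -> (j < n)%nat -> Rs i j = true ->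
     cont_on unit_int (w i j).
Variables (sg : nat -> nat -> nat -> R) (s : nat -> nat -> R).
Hypothesis Hsg : forall N, GP n k Rs N (sg N).
Hypothesis Hmin : forall N t, GP n k Rs N t -> ~ prec n (cN k f Rs w N t) (cN k f Rs w N (sg N)).
Hypothesis Hcl : forall eps, 0 < eps -> forall N0, exists N, (N0 <= N)%nat /\
   forall i j, (i < k)%nat -> (j < n)%nat -> Rabs (sg N i j - s i j) < eps.

Lemma s_strong : is_strong_NE n k f Rs w s.
Proof.
  assert (Hspr := s_profile n k Rs sg s Hsg Hcl).
  assert (Hsb : inbox n k s) by (apply (profile_box n k Rs); auto).
  assert (HNE := s_NE n k f Rs w Hf_mono Hw_nonneg Hw_incr Hf_cont Hw_cont sg s Hsg Hmin Hcl).
  split; auto. intros [s' [Hs' [Hneq Hdev]]].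
  assert (Hs'b : inbox n k s') by (apply (profile_box n k Rs); auto).
  set (incr := fun i => exists l, (l < n)%nat /\ s i l < s' i l).
  assert (Hnoinc : forall i, (i < k)%nat -> ~ incr i -> forall l, (l < n)%nat -> s' i l = s i l).
  { intros i Hi Hni. destruct (Hspr i Hi) as [_ [_ H1]]. destruct (Hs' i Hi) as [_ [_ H2]].
    apply (same_if_no_incr n (s i) (s' i)); auto. intros l Hl Hlt. apply Hni. exists l; auto. }
  assert (Hi0 : exists i0, (i0 < k)%nat /\ incr i0).
  { destruct Hneq as [i [j [Hi [Hj Hne]]]]. exists i. split; auto. apply NNPP. intros Hni.
    apply Hne. apply Hnoinc; auto. }
  destruct Hi0 as [i0 [Hi0k Hi0]].
  set (l0 := fun i => match excluded_middle_informative (incr i) with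
     | left H => proj1_sig (constructive_indefinite_description _ H) | right _ => O end).
  assert (Hl0 : forall i, incr i -> (l0 i < n)%nat /\ s i (l0 i) < s' i (l0 i)).
  { intros i Hinc. unfold l0. destruct (excluded_middle_informative (incr i)); [|tauto].
    destruct (constructive_indefinite_description _ i1) as [l Hl]. simpl. auto. }
  destruct (fin_min k (fun i g => forall l, (l < n)%nat -> s i l <> s' i l -> g <= Rabs (s i l - s' i l)))
    as [g [Hg Hgap]].
  { intros p d d' H [H1 H2] l Hl Hne. specialize (H l Hl Hne). lra. }
  { intros i Hi. apply fin_min.
    - intros p d d' H [H1 H2] Hne. specialize (H Hne). lra.
    - intros l Hl. destruct (Req_dec (s i l) (s' i l)).
      + exists 1. split; [lra|]. tauto.
      + exists (Rabs (s i l - s' i l)). split; [|intros; lra]. apply Rabs_pos_lt. lra. }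
  destruct (fin_min k (fun i e => forall l, (l < n)%nat -> forall m, (m < n)%nat -> s i l < s' i l -> 0 < s i m ->
      cost k f Rs w s' l + 2 * e < cost k f Rs w s m)) as [e [He Hmarg]].
  { intros p d d' H [H1 H2] l Hl m Hm Hlt Hpos. specialize (H l Hl m Hm Hlt Hpos). lra. }
  { intros i Hi. apply fin_min.
    - intros p d d' H [H1 H2] m Hm Hlt Hpos. specialize (H m Hm Hlt Hpos). lra.
    - intros l Hl. apply (fin_min n (fun m e => s i l < s' i l -> 0 < s i m -> cost k f Rs w s' l + 2 * e < cost k f Rs w s m)).
      + intros p d d' H [H1 H2] Hlt Hpos. specialize (H Hlt Hpos). lra.
      + intros m Hm. destruct (classic (s i l < s' i l /\ 0 < s i m)) as [[Hlt Hpos]|Hno].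
        * assert (C := Hdev i l m Hi Hl Hm Hlt Hpos).
          exists ((cost k f Rs w s m - cost k f Rs w s' l) / 3). split; [lra|]. intros; lra.
        * exists 1. split; [lra|]. intros; tauto. }
  destruct (cN_cont n k f Rs w Hw_nonneg Hf_cont Hw_cont s Hsb e He) as [d1 [N01 [Hd1 Hc1]]].
  destruct (cN_cont n k f Rs w Hw_nonneg Hf_cont Hw_cont s' Hs'b e He) as [d2 [N02 [Hd2 Hc2]]].
  assert (Hn1 : 0 < INR n + 1) by (assert (0 <= INR n) by apply pos_INR; lra).
  set (ec := Rmin d1 (Rmin (d2 / (INR n + 1)) (g / (2 * (INR n + 1))))).
  assert (Hec : 0 < ec). { unfold ec. repeat apply Rmin_pos; auto; apply Rdiv_lt_0_compat; lra. }
  assert (Hec1 : ec <= d1) by apply Rmin_l.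
  assert (Hec2 : (INR n + 1) * ec <= d2).
  { assert (ec <= d2 / (INR n + 1)) by (eapply Rle_trans; [apply Rmin_r|apply Rmin_l]).
    apply Rmult_le_compat_l with (r := INR n + 1) in H; [|lra]. 
    replace ((INR n + 1) * (d2 / (INR n + 1))) with d2 in H by (field; lra). lra. }
  assert (Hec3 : (INR n + 1) * ec <= g / 2).
  { assert (ec <= g / (2 * (INR n + 1))) by (eapply Rle_trans; [apply Rmin_r|apply Rmin_r]).
    apply Rmult_le_compat_l with (r := INR n + 1) in H; [|lra].
    replace ((INR n + 1) * (g / (2 * (INR n + 1)))) with (g / 2) in H by (field; lra). lra. }
  assert (Hnec : 0 <= INR n * ec) by (apply Rmult_le_pos; [apply pos_INR|lra]).
  destruct (inv_small ec Hec) as [N1 HN1].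
  destruct (Hcl ec Hec (N01 + N02 + N1)) as [N [HN Hclose]].
  set (D := S N). set (sN := sg N).
  assert (HD : 0 < INR D) by (apply lt_0_INR; unfold D; lia).
  assert (HDs : 1 / INR D < ec) by (apply HN1; lia).
  destruct (Hsg N) as [Hpr Hgr]. fold sN in Hpr, Hgr.
  assert (HsNb : inbox n k sN) by (apply (profile_box n k Rs); auto).
  set (fl := fun x => INR (proj1_sig (constructive_indefinite_description _ (floor_ex D x))) / INR D).
  assert (Hfl : forall x, 0 <= x -> fl x <= x < fl x + 1 / INR D /\ 0 <= fl x /\ isg D (fl x)).
  { intros x Hx. unfold fl. destruct (constructive_indefinite_description _ (floor_ex D x)) as [a Ha]. simpl.
    destruct (Ha Hx) as [A1 A2]. split; [split|split].
    - apply Rmult_le_reg_r with (INR D); auto. rewrite div_mul_cancel; auto.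
    - apply Rmult_lt_reg_r with (INR D); auto. rewrite Rmult_plus_distr_r.
      rewrite (div_mul_cancel (INR a)) by auto. rewrite (div_mul_cancel 1) by auto. lra.
    - apply Rmult_le_pos. apply pos_INR. left; apply Rinv_0_lt_compat; auto.
    - exists a. apply div_mul_cancel; auto. }
  set (oth := fun i l => if Req_EM_T (s i l) (s' i l) then sN i l else fl (s' i l)).
  set (t := fun i l => if excluded_middle_informative (incr i) then
      (if Nat.eq_dec l (l0 i) then 1 - sumR n (fun l' => if Nat.eq_dec l' (l0 i) then 0 else oth i l') else oth i l)
      else sN i l).
  assert (Hclose' : forall i l, (i < k)%nat -> (l < n)%nat -> Rabs (sN i l - s i l) < ec) by (intros; apply Hclose; auto).
  assert (Hoth : forall i l, (i < k)%nat -> (l < n)%nat -> Rabs (oth i l - s' i l) < ec /\ 0 <= oth i l /\ isg D (oth i l)).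
  { intros i l Hi Hl. unfold oth. destruct (Req_EM_T (s i l) (s' i l)) as [Heq|Hne].
    - rewrite <- Heq. split; auto. split. apply HsNb; auto. apply Hgr; auto.
    - destruct (Hs'b i l Hi Hl) as [B1 B2]. destruct (Hfl (s' i l) B1) as [[F1 F2] [F3 F4]].
      split; [|split; auto]. rewrite Rabs_minus_sym. rewrite Rabs_right by lra. lra. }
  assert (HtL : forall i, (i < k)%nat -> incr i ->
      t i (l0 i) - s' i (l0 i) = sumR n (fun l => if Nat.eq_dec l (l0 i) then 0 else s' i l - oth i l)).
  { intros i Hi Hinc. unfold t. destruct (excluded_middle_informative (incr i)); [|tauto].
    destruct (Nat.eq_dec (l0 i) (l0 i)); [|lia].
    destruct (Hs' i Hi) as [_ [_ H3]]. destruct (Hl0 i Hinc) as [Hl0n _].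
    rewrite (sumR_split n (l0 i) (fun j => s' i j) Hl0n) in H3.
    assert (E : sumR n (fun l => if Nat.eq_dec l (l0 i) then 0 else s' i l - oth i l) =
       sumR n (fun j => if Nat.eq_dec j (l0 i) then 0 else s' i j) - sumR n (fun l' => if Nat.eq_dec l' (l0 i) then 0 else oth i l')).
    { rewrite <- sumR_minus. apply sumR_ext. intros j Hj. destruct (Nat.eq_dec j (l0 i)); lra. }
    rewrite E. lra. }
  assert (HtL' : forall i, (i < k)%nat -> incr i -> Rabs (t i (l0 i) - s' i (l0 i)) <= INR n * ec).
  { intros i Hi Hinc. rewrite HtL by auto. apply sumR_bound. intros l Hl.
    destruct (Nat.eq_dec l (l0 i)). rewrite Rabs_R0. lra. destruct (Hoth i l Hi Hl) as [O1 _].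
    rewrite Rabs_minus_sym. lra. }
  assert (HtL0 : forall i, (i < k)%nat -> incr i -> sN i (l0 i) < t i (l0 i) /\ 0 < t i (l0 i)).
  { intros i Hi Hinc. destruct (Hl0 i Hinc) as [Hl0n Hlt].
    assert (G := Hgap i Hi (l0 i) Hl0n ltac:(lra)). rewrite Rabs_minus_sym, Rabs_right in G by lra.
    assert (C1 := HtL' i Hi Hinc). apply abs_le_b in C1.
    assert (C2 := Hclose' i (l0 i) Hi Hl0n). apply Rabs_def2 in C2.
    destruct (Hsb i (l0 i) Hi Hl0n). destruct (HsNb i (l0 i) Hi Hl0n). lra. }
  assert (Ht_l0 : forall i, incr i -> t i (l0 i) = 1 - sumR n (fun l' => if Nat.eq_dec l' (l0 i) then 0 else oth i l')).
  { intros i Hinc. unfold t. destruct (excluded_middle_informative (incr i)); [|tauto].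
    destruct (Nat.eq_dec (l0 i) (l0 i)); [auto|lia]. }
  assert (Ht_oth : forall i l, incr i -> l <> l0 i -> t i l = oth i l).
  { intros i l Hinc Hne. unfold t. destruct (excluded_middle_informative (incr i)); [|tauto].
    destruct (Nat.eq_dec l (l0 i)); [lia|auto]. }
  assert (Ht_no : forall i l, ~ incr i -> t i l = sN i l).
  { intros i l Hinc. unfold t. destruct (excluded_middle_informative (incr i)); [tauto|auto]. }
  assert (Htclose : forall i l, (i < k)%nat -> (l < n)%nat -> Rabs (t i l - s' i l) < d2).
  { intros i l Hi Hl. destruct (classic (incr i)) as [Hinc|Hni].
    - destruct (Nat.eq_dec l (l0 i)) as [->|Hne].
      + assert (C := HtL' i Hi Hinc). lra.
      + rewrite Ht_oth by auto. destruct (Hoth i l Hi Hl) as [O1 _]. lra.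
    - rewrite Ht_no by auto. rewrite (Hnoinc i Hi Hni l Hl). assert (C := Hclose' i l Hi Hl). lra. }
  assert (HtGP : GP n k Rs N t).
  { split.
    - intros i Hi. destruct (classic (incr i)) as [Hinc|Hni].
      + destruct (Hl0 i Hinc) as [Hl0n Hlt]. split; [|split].
        * intros l Hl. destruct (Nat.eq_dec l (l0 i)) as [->|Hne].
          -- destruct (HtL0 i Hi Hinc). lra.
          -- rewrite Ht_oth by auto. apply (Hoth i l Hi Hl).
        * intros l Hl HR. destruct (Nat.eq_dec l (l0 i)) as [->|Hne].
          -- exfalso. destruct (Hs' i Hi) as [_ [H2 _]]. rewrite (H2 _ Hl HR) in Hlt.
             destruct (Hsb i (l0 i) Hi Hl). lra.
          -- rewrite Ht_oth by auto. unfold oth.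
             destruct (Hspr i Hi) as [_ [H2 _]]. destruct (Hs' i Hi) as [_ [H2' _]].
             rewrite (H2 l Hl HR), (H2' l Hl HR). destruct (Req_EM_T 0 0); [|lra].
             destruct (Hpr i Hi) as [_ [H2'' _]]. apply H2''; auto.
        * rewrite (sumR_split n (l0 i) (fun l => t i l) Hl0n). rewrite Ht_l0 by auto.
          assert (E : sumR n (fun j => if Nat.eq_dec j (l0 i) then 0 else t i j) =
                      sumR n (fun l' => if Nat.eq_dec l' (l0 i) then 0 else oth i l')).
          { apply sumR_ext. intros j Hj. destruct (Nat.eq_dec j (l0 i)); auto. }
          rewrite E. lra.
      + destruct (Hpr i Hi) as [P1 [P2 P3]]. split; [|split].
        * intros l Hl. rewrite Ht_no; auto.
        * intros l Hl HR. rewrite Ht_no; auto.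
        * rewrite <- P3. apply sumR_ext. intros l Hl. apply Ht_no; auto.
    - intros i l Hi Hl. fold D. destruct (classic (incr i)) as [Hinc|Hni].
      + destruct (Nat.eq_dec l (l0 i)) as [->|Hne].
        * rewrite Ht_l0 by auto. apply isg_one_minus.
          -- apply isg_sumR. intros j Hj. destruct (Nat.eq_dec j (l0 i)). apply isg_0. apply Hoth; auto.
          -- rewrite <- Ht_l0 by auto. destruct (HtL0 i Hi Hinc). lra.
        * rewrite Ht_oth by auto. apply Hoth; auto.
      + rewrite Ht_no by auto. apply Hgr; auto. }
  assert (Htb : inbox n k t) by (apply (profile_box n k Rs), HtGP).
  assert (Hweak : forall m, (m < n)%nat -> (forall i, (i < k)%nat -> t i m <= sN i m) ->
      cN k f Rs w N t m <= cN k f Rs w N sN m).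
  { intros m Hm Hle. unfold cN.
    assert (cost k f Rs w t m <= cost k f Rs w sN m) by (apply (cost_le n k); auto).
    assert (load k Rs w t m <= load k Rs w sN m) by (apply (load_le n k); auto).
    assert (0 < INR (S N)) by (apply lt_0_INR; lia).
    assert (load k Rs w t m / INR (S N) <= load k Rs w sN m / INR (S N)).
    { unfold Rdiv. apply Rmult_le_compat_r; auto. left; apply Rinv_0_lt_compat; auto. }
    lra. }
  assert (Hstrict : forall m i, (m < n)%nat -> (i < k)%nat -> sN i m < t i m ->
      cN k f Rs w N t m < cN k f Rs w N sN m).
  { intros m i Hm Hi Hlt.
    assert (Hinc : s i m < s' i m).
    { destruct (classic (incr i)) as [Hinc|Hni]; [|rewrite Ht_no in Hlt by auto; lra].
      destruct (Nat.eq_dec m (l0 i)) as [->|Hne]; [apply (Hl0 i Hinc)|].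
      rewrite Ht_oth in Hlt by auto. unfold oth in Hlt.
      destruct (Req_EM_T (s i m) (s' i m)) as [Heq|Hne']; [lra|].
      destruct (Rlt_dec (s i m) (s' i m)) as [|Hge]; auto. exfalso.
      assert (Hgt : s' i m < s i m) by lra.
      assert (G := Hgap i Hi m Hm Hne'). rewrite Rabs_right in G by lra.
      destruct (Hs'b i m Hi Hm) as [B1 B2]. destruct (Hfl (s' i m) B1) as [[F1 F2] _].
      assert (C := Hclose' i m Hi Hm). apply Rabs_def2 in C.
      assert (ec <= g / 2).
      { assert (0 <= INR n * ec) by auto. nra. }
      lra. }
    destruct (Hspr i Hi) as [_ [_ H3]]. destruct (pos_entry n (fun j => s i j) H3) as [m'' [Hm'' Hpos]].
    assert (M := Hmarg i Hi m Hm m'' Hm'' Hinc Hpos).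
    assert (HRm : Rs i m = true).
    { destruct (Rs i m) eqn:E; auto. destruct (Hs' i Hi) as [_ [H2 _]]. rewrite (H2 m Hm E) in Hinc.
      destruct (Hsb i m Hi Hm). lra. }
    destruct HNE as [_ HNE']. assert (NE := HNE' i m'' m Hi Hm'' Hm Hpos HRm).
    assert (A1 : Rabs (cN k f Rs w N t m - cost k f Rs w s' m) < e).
    { apply Hc2; auto. lia. }
    assert (A2 : Rabs (cN k f Rs w N sN m - cost k f Rs w s m) < e).
    { apply Hc1; auto. lia. intros i' j' Hi' Hj'. assert (C := Hclose' i' j' Hi' Hj'). lra. }
    apply Rabs_def2 in A1. apply Rabs_def2 in A2. lra. }
  apply (Hmin N t HtGP). fold sN.
  destruct (Hl0 i0 Hi0) as [Hl0n _].
  apply prec_crit with (l0 i0); auto.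
  - apply Hstrict with i0; auto. apply (HtL0 i0 Hi0k Hi0).
  - intros m Hm. left. destruct (classic (exists i, (i < k)%nat /\ sN i m < t i m)) as [[i [Hi Hlt]]|Hno].
    + left. apply Hstrict with i; auto.
    + apply Hweak; auto. intros i Hi. destruct (Rle_dec (t i m) (sN i m)); auto.
      exfalso. apply Hno. exists i. split; auto. lra.
Qed.
End Strong.


Module Clus.
From mathcomp Require Import all_boot all_order all_algebra.
From mathcomp Require Import all_classical all_reals all_analysis.
From mathcomp Require Import Rstruct Rstruct_topology.
Import Order.TTheory GRing.Theory Num.Theory.
Import numFieldNormedType.Exports.
Local Open Scope classical_set_scope.
Local Open Scope ring_scope.

Lemma seq_cluster_aux (m : nat) (u : nat -> nat -> R) :
  (forall N i, lt i (S m) -> Rle 0 (u N i) /\ Rle (u N i) 1) ->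
  exists x : nat -> R,
  forall eps : R, Rlt 0 eps -> forall N0, exists N, le N0 N /\
    forall i, lt i (S m) -> Rlt (Rabs (u N i - x i)) eps.
Proof.
move=> Hb.
pose v := fun N : nat => (\row_i u N i : 'rV[R]_m.+1).
pose A := [set w : 'rV[R]_m.+1 | forall i, `[0%R, 1%R]%classic (w ord0 i)].
have cA : compact A.
  have := @rV_compact R m.+1 (fun=> `[0%R, 1%R]%classic).
  apply. move=> i. apply: segment_compact.
have FA : (v @ \oo) A.
  exists 0%N => // N _ i; rewrite /v mxE /= in_itv /=.
  have [h1 h2] := Hb N i (elimT ssrnat.ltP (ltn_ord i)); apply/andP; split; exact/RleP.
have [x [Ax clx]] := cA _ _ FA.
exists (fun p => x ord0 (inord p)).
move=> eps /RltP eps0 N0.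
have FB : (v @ \oo) (v @` [set N | (N0 <= N)%N]).
  exists N0 => // N /= HN; exists N => //.
have := clx _ _ FB (nbhsx_ballx x eps eps0).
move=> [w [[N HN <-] Hball]].
exists N; split; first exact/ssrnat.leP. move=> i /ssrnat.ltP Hi.
have [_ H] := Hball; have := H ord0 (Ordinal Hi); rewrite /v mxE /ball /= => Hi'.
have -> : (inord i : 'I_m.+1) = Ordinal Hi by apply/val_inj; rewrite /= inordK.
apply/RltP; rewrite RabsE RminusE distrC //.
Qed.
End Clus.

Lemma seq_cluster2 (k n : nat) (u : nat -> nat -> nat -> R) :
  (forall N i j, (i < k)%nat -> (j < n)%nat -> 0 <= u N i j <= 1) ->
  exists x : nat -> nat -> R, forall eps, 0 < eps -> forall N0, exists N, (N0 <= N)%nat /\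
    forall i j, (i < k)%nat -> (j < n)%nat -> Rabs (u N i j - x i j) < eps.
Proof.
  intros Hb. destruct (Nat.eq_dec (k * n) 0) as [H0|H0].
  - exists (fun _ _ => 0). intros eps Heps N0. exists N0. split; [lia|]. intros i j Hi Hj. nia.
  - assert (Hn : n <> 0%nat) by (intros ->; lia).
    destruct (Clus.seq_cluster_aux (k * n - 1) (fun N p => u N (p / n)%nat (p mod n)%nat)) as [X HX].
    + intros N p Hp. apply Hb.
      * apply Nat.Div0.div_lt_upper_bound. lia.
      * apply Nat.mod_upper_bound; auto.
    + exists (fun i j => X (i * n + j)%nat). intros eps Heps N0. destruct (HX eps Heps N0) as [N [HN HN']].
      exists N. split; auto. intros i j Hi Hj.
      assert (Hp : (i * n + j < S (k * n - 1))%nat) by nia.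
      specialize (HN' _ Hp). simpl in HN'.
      assert (E1 : ((i * n + j) / n)%nat = i).
      { rewrite Nat.div_add_l by auto. rewrite Nat.div_small by auto. lia. }
      assert (E2 : ((i * n + j) mod n)%nat = j).
      { rewrite Nat.add_comm, Nat.Div0.mod_add. apply Nat.mod_small; auto. }
      rewrite E1, E2 in HN'. auto.
Qed.

Theorem mainTheorem5 (n k : nat) (f : nat -> R -> R) (Rs : nat -> nat -> bool)
  (w : nat -> nat -> R -> R)
  (Hf_mono : forall j, (j < n)%nat -> forall x y, 0 <= x -> x <= y -> f j x <= f j y)
  (HR_ne : forall i, (i < k)%nat -> exists j, (j < n)%nat /\ Rs i j = true)
  (Hw_nonneg : forall i j, (i < k)%nat -> (j < n)%nat -> Rs i j = true ->
     forall x, 0 <= x <= 1 -> 0 <= w i j x)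
  (Hw_incr : forall i j, (i < k)%nat -> (j < n)%nat -> Rs i j = true ->
     forall x y, 0 <= x -> x < y -> y <= 1 -> w i j x < w i j y)
  (Hf_cont : forall j, (j < n)%nat -> cont_on nonneg_half (f j))
  (Hw_cont : forall i j, (i < k)%nat -> (j < n)%nat -> Rs i j = true ->
     cont_on unit_int (w i j)) :
  exists s, is_strong_NE n k f Rs w s.
Proof.
  assert (Hex := exists_min n k f Rs w HR_ne).
  set (sg := fun N => proj1_sig (constructive_indefinite_description _ (Hex N))).
  assert (Hsg : forall N, GP n k Rs N (sg N) /\ forall t, GP n k Rs N t -> ~ prec n (cN k f Rs w N t) (cN k f Rs w N (sg N))).
  { intros N. unfold sg. destruct (constructive_indefinite_description _ (Hex N)) as [x Hx]. simpl. auto. }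
  destruct (seq_cluster2 k n sg) as [s Hcl].
  { intros N i j Hi Hj. destruct (Hsg N) as [[Hp _] _]. apply (profile_box n k Rs); auto. }
  exists s. apply (s_strong n k f Rs w Hf_mono Hw_nonneg Hw_incr Hf_cont Hw_cont sg s); auto.
  - intros N. apply Hsg.
  - intros N. apply Hsg.
Qed.
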